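(* Let $Q=(V,T,U,D,s,R)$ be a left-extended queue grammar. Then there exists a context-free grammar $G=(\overline V,T,P,S)$ with $\{0,1,\#\}\subseteq \overline V$ such that $L(Q)=L(G,F)$, where $F=\{w\#w^R\mid w\in\{0,1\}^*\}$ and the finalizing alphabet is $W=\{0,1,\#\}$.
   Context: A left-extended queue grammar is a sextuple $Q=(V,T,U,D,s,R)$ where $V,U$ are alphabets with $V\cap U=\emptyset$, $T\subseteq V$, $D\subseteq U$, $s\in(V-T)(U-D)$, and $R\subseteq (V\times(U-D))\times(V^*\times U)$ is finite. Let $\#\notin V\cup U$. For $u,v\in V^*\{\#\}V^*U$, write $u\Rightarrow v$ if $u=w\#arb$, $v=wa\#rzc$ with $a\in V$, $r,z,w\in V^*$, $b,c\in U$ and $(a,b,z,c)\in R$; $\Rightarrow^*$ is its reflexive-transitive closure. $L(Q)=\{v\in T^*\mid \#s\Rightarrow^* w\#vf$ for some $w\in V^*$, $f\in D\}$. A context-free grammar $G=(V,T,P,S)$ has total alphabet $V$, terminals $T\subseteq V$, nonterminals $N=V-T$, finite rules $P\subseteq N\times V^*$, start $S\in N$; $\phi(G)=\{w\in V^*\mid S\Rightarrow^*w\}$. For $X\subseteq V$, $\pi_X$ is the homomorphism from $V^*$ to $X^*$ keeping symbols of $X$ and erasing the others. For $W\subseteq V$ and $F\subseteq W^*$, $\phi(G,F)=\{x\in\phi(G)\mid\pi_W(x)\in F\}$ and $L(G,F)=\{\pi_T(y)\mid y\in\phi(G,F),\ \pi_{N-W}(y)=\varepsilon\}$. $w^R$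 denotes the reversal of $w$. *)

(* Defs.v *)
From Stdlib Require Import Relations.
From mathcomp Require Import all_boot.
Set Implicit Arguments. Unset Strict Implicit. Unset Printing Implicit Defensive.

(* Q = (V, T, U, D, s, R): V and U are given as two finite types (hence
   disjoint); T : {set V}, D : {set U}; s = s0 s1 with s0 : V, s1 : U;
   R a finite list of rules (a, b, z, c) : V * U * seq V * U.
   A configuration  w # x b  is represented by the triple (w, x, b). *)

Section Queue.
Variables (V U : finType).

Definition qconf := (seq V * seq V * U)%type.

Inductive qstep (R : seq (V * U * seq V * U)) : qconf -> qconf -> Prop :=
| QStep (w r z : seq V) (a : V) (b c : U) :
    (a, b, z, c) \in R -> qstep R (w, a :: r, b) (w ++ [:: a], r ++ z, c).

Definition qlang (T : {set V}) (D : {set U}) (s0 : V) (s1 : U)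
  (R : seq (V * U * seq V * U)) (v : seq V) : Prop :=
  all (fun x => x \in T) v /\
  exists (w : seq V) (f : U), f \in D /\
    clos_refl_trans _ (qstep R) ([::], [:: s0], s1) (w, v, f).
End Queue.

(* A CFG G = (Vbar, T, P, S) with terminal alphabet Tm and nonterminal
   alphabet Nt; total alphabet Vbar = Tm + Nt (inl = terminals). *)
Section CFG.
Variables (Tm Nt : finType).
Definition gsym := (Tm + Nt)%type.

Inductive cstep (P : seq (Nt * seq gsym)) : seq gsym -> seq gsym -> Prop :=
| CStep (x1 x2 rhs : seq gsym) (A : Nt) :
    (A, rhs) \in P -> cstep P (x1 ++ inr A :: x2) (x1 ++ rhs ++ x2).

Definition sentential (P : seq (Nt * seq gsym)) (S : Nt) (y : seq gsym) : Prop :=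
  clos_refl_trans _ (cstep P) [:: inr S] y.

Definition is_nonterm (a : gsym) : bool := if a is inr _ then true else false.

Definition piT (y : seq gsym) : seq Tm :=
  pmap (fun a => if a is inl t then Some t else None) y.

Definition piX (X : seq gsym) (y : seq gsym) : seq gsym :=
  filter (fun a => a \in X) y.

Definition inF (zero one hash : gsym) (u : seq gsym) : Prop :=
  exists w : seq bool,
    let w' := map (fun b : bool => if b then one else zero) w in
    u = w' ++ hash :: rev w'.

Definition cflangF (P : seq (Nt * seq gsym)) (S : Nt) (zero one hash : gsym)
  (v : seq Tm) : Prop :=
  exists y : seq gsym,
    [/\ sentential P S y,
        inF zero one hash (piX [:: zero; one; hash] y),
        [seq a <- y | is_nonterm a && (a \notin [:: zero; one; hash])] = [::]
      & v = piT y].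
End CFG.

Definition termT (V : finType) (T : {set V}) : finType := {x : V | x \in T}.

(* Main.v *)
Require Import Defs.
From Stdlib Require Import Relations.
From mathcomp Require Import all_boot zify.
Set Implicit Arguments. Unset Strict Implicit. Unset Printing Implicit Defensive.

Section Constr.
Variables (V U : finType) (T : {set V}) (D : {set U}) (s0 : V) (s1 : U)
  (R : seq (V * U * seq V * U)).

Local Notation Tm := (termT T).
Definition Nt : finType := (bool * U + option (option bool))%type.
Local Notation gs := (gsym Tm Nt).
Definition NX b : Nt := inl (false, b).
Definition NY b : Nt := inl (true, b).
Definition NS : Nt := inr None.
Definition NH : Nt := inr (Some None).
Definition bsym (x : bool) : gs := inr (inr (Some (Some x))).
Definition item := (option V + Tm)%type.
Definition cd (o : option V) : seq bool := rcons (nseq (pickle o) true) false.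
Definition enc (it : item) : seq gs :=
  match it with inl o => map bsym (cd o) | inr t => [:: inl t] end.
Definition renc (o : option V) : seq gs := map bsym (rev (cd o)).
Definition arule := (Nt * seq item * Nt * seq (option V))%type.
Definition mkprod (r : arule) : Nt * seq gs :=
  let '(N, its, N', os) := r in
  (N, flatten (map enc its) ++ inr N' :: flatten (map renc (rev os))).
Definition tconv (s : seq V) : option (seq Tm) :=
  if all (fun x => x \in T) s then Some (pmap insub s) else None.
Definition swrules a b z c : seq arule :=
  pmap (fun i => if tconv (drop i z) is Some t2 then
             Some (NX b, map inl (map Some (take i z)) ++ map inr t2, NY c, [:: Some a])
           else None) (iota 0 (size z).+1).
Arguments swrules : simpl never.
Definition rulesOf (r : V * U * seq V * U) : seq arule :=
  let '(a, b, z, c) := r in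
  (NX b, map inl (rcons (map Some z) None), NX c, [:: Some a])
  :: (if tconv z is Some t then [:: (NY b, map inr t, NY c, [:: Some a])] else [::])
  ++ swrules a b z c.
Definition arules : seq arule :=
  [:: (NS, [:: inl (Some s0)], NX s1, [::])]
  ++ flatten [seq rulesOf r | r <- R]
  ++ flatten [seq [:: (NX b, [:: inl None], NX b, [:: None]); (NY b, [::], NY b, [:: None])] | b <- enum U]
  ++ [seq (NY f, [::], NH, [::]) | f <- enum D].
Definition acfg := (seq item * Nt * seq (option V))%type.
Inductive astep : acfg -> acfg -> Prop :=
  AStep lw N its N' os cs : (N, its, N', os) \in arules -> astep (lw, N, cs) (lw ++ its, N', cs ++ os).
Definition conc (c : acfg) : seq gs :=
  let '(lw, N, cs) := c in flatten (map enc lw) ++ inr N :: flatten (map renc (rev cs)).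
Definition P := map mkprod arules.
Definition somes (s : seq (option V)) := pmap id s.
Definition vwi (it : item) : option V := match it with inl o => o | inr t => Some (val t) end.
Definition vw (lw : seq item) := map vwi lw.
Definition astar := clos_refl_trans _ astep.

Lemma arules_inv N its N' os : (N, its, N', os) \in arules ->
  [\/ [/\ N = NS, its = [:: inl (Some s0)], N' = NX s1 & os = [::]],
      (exists a b z c, [/\ (a, b, z, c) \in R, N = NX b, its = map inl (rcons (map Some z) None), N' = NX c & os = [:: Some a]]),
      (exists a b z c t, [/\ (a, b, z, c) \in R, tconv z = Some t, N = NY b, its = map inr t & (N' = NY c /\ os = [:: Some a])])
    | (exists a b z c i t2, [/\ (a, b, z, c) \in R, tconv (drop i z) = Some t2, N = NX b, its = (map inl (map Some (take i z)) ++ map inr t2) & (N' = NY c /\ os = [:: Some a])]) \/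
      (exists b, [\/ [/\ N = NX b, its = [:: inl None], N' = NX b & os = [:: None]],
                   [/\ N = NY b, its = [::], N' = NY b & os = [:: None]] |
                   [/\ N = NY b, b \in D, its = [::] & (N' = NH /\ os = [::])]])].
Proof.
rewrite /arules !mem_cat => /or4P [].
- by rewrite inE => /eqP [-> -> -> ->]; apply: Or41.
- case/flatten_mapP => [[[[a b] z] c]] Hr /=; rewrite inE mem_cat.
  case/or3P.
  + by move/eqP=> [-> -> -> ->]; apply: Or42; exists a, b, z, c.
  + case E: (tconv z) => [t|] //; rewrite inE => /eqP [-> -> -> ->].
    by apply: Or43; exists a, b, z, c, t.
  + rewrite /swrules mem_pmap => /mapP [i _].
    case E: (tconv (drop i z)) => [t2|] // [-> -> -> ->].
    by apply: Or44; left; exists a, b, z, c, i, t2.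
- case/flatten_mapP => b _; rewrite !inE => /orP [] /eqP [-> -> -> ->]; apply: Or44; right; exists b.
  + by apply: Or31.
  + by apply: Or32.
- by case/mapP => f; rewrite mem_enum => Hf [-> -> -> ->]; apply: Or44; right; exists f; apply: Or33.
Qed.



Definition cinit : acfg := ([::], NS, [::]).

Lemma conc_app (lw its : seq item) (N' : Nt) (os cs : seq (option V)) :
  conc (lw ++ its, N', cs ++ os) =
  flatten (map enc lw) ++ (flatten (map enc its) ++ inr N' :: flatten (map renc (rev os)))
  ++ flatten (map renc (rev cs)).
Proof. by rewrite /= map_cat flatten_cat rev_cat map_cat flatten_cat -!catA. Qed.

Lemma conc_step c c' : astep c c' -> cstep P (conc c) (conc c').
Proof.
case=> lw N its N' os cs Hin; rewrite conc_app.
have -> : conc (lw, N, cs) = flatten (map enc lw) ++ inr N :: flatten (map renc (rev cs)) by [].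
have HP : (N, flatten (map enc its) ++ inr N' :: flatten (map renc (rev os))) \in P.
  by apply/mapP; exists (N, its, N', os).
exact: CStep HP.
Qed.

Lemma star_sent c c' : astar c c' -> clos_refl_trans _ (cstep P) (conc c) (conc c').
Proof.
elim=> [x y /conc_step H | x | x y z _ H1 _ H2].
- exact: rt_step.
- exact: rt_refl.
- exact: rt_trans H1 H2.
Qed.

Lemma reach_sent c : astar cinit c -> sentential P NS (conc c).
Proof. exact: star_sent. Qed.

Definition act (a : gs) : bool :=
  match a with inr (inl _) => true | inr (inr None) => true | _ => false end.

Lemma enc_nact lw : ~~ has act (flatten (map enc lw)).
Proof.
elim: lw => //= it lw IH; rewrite has_cat negb_or IH andbT.
case: it => [o|t] //=; by elim: (cd o).
Qed.

Lemma renc_nact cs : ~~ has act (flatten (map renc cs)).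
Proof.
elim: cs => //= o cs IH; rewrite has_cat negb_or IH andbT.
by rewrite /renc; elim: (rev (cd o)).
Qed.

Lemma act_lhs A rhs : (A, rhs) \in P -> act (inr A).
Proof.
case/mapP=> [[[[N its] N'] os]] /arules_inv H /= [-> _].
by case: H => [[-> _ _ _]|[a[b[z[c[_ -> _ _ _]]]]]|[a[b[z[c[t[_ _ -> _ _]]]]]]|
  [[a[b[z[c[i[t2[_ _ -> _ _]]]]]]]|[b [[-> _ _ _]|[-> _ _ _]|[-> _ _ _]]]]].
Qed.

Lemma decomp (x1 x2 L Rr : seq gs) A N :
  act A -> ~~ has act L -> ~~ has act Rr ->
  x1 ++ A :: x2 = L ++ N :: Rr -> [/\ x1 = L, A = N & x2 = Rr].
Proof.
move=> HA; elim: x1 L => [|h x1 IH] [|l L] //=.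
- by move=> _ _ [-> ->].
- by move=> /norP [] ; move=> Hl _ _ [El _]; rewrite -El HA in Hl.
- move=> _ HR [_ E]; have : A \in Rr by rewrite -E mem_cat inE eqxx orbT.
  by move=> Hm; move/hasPn: HR => /(_ _ Hm); rewrite HA.
- move=> /norP [_ HL] HR [-> E]; by case: (IH _ HL HR E) => -> -> ->.
Qed.

Lemma sent_reach y : sentential P NS y -> exists c, astar cinit c /\ y = conc c.
Proof.
move/clos_rt_rtn1_iff; elim=> [|y0 y1 Hs _ [c [Hc E]]].
- by exists cinit; split; [exact: rt_refl|].
- case: Hs E => x1 x2 rhs A Hin.
  case: c Hc => [[lw N] cs] Hc /= E.
  case: (decomp (act_lhs Hin) (enc_nact lw) (renc_nact (rev cs)) E) => E1 E2 E3.
  subst x1 x2; case: E2 => EA; subst A.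
  move: Hin => /mapP [[[[N0 its] N'] os] Hin [E4 E5]].
  subst N0 rhs.
  exists (lw ++ its, N', cs ++ os); split; last by rewrite conc_app.
  apply: rt_trans Hc _; apply: rt_step; exact: AStep.
Qed.

Definition isYH (N : Nt) : bool :=
  match N with inl (true, _) => true | inr (Some None) => true | _ => false end.

Lemma mono c c' : astar c c' -> exists u1 u2, c'.1.1 = c.1.1 ++ u1 /\ c'.2 = c.2 ++ u2.
Proof.
elim=> [x y [lw N its N' os cs _] | x | x y z _ [u1 [u2 [E1 E2]]] _ [v1 [v2 [F1 F2]]]].
- by exists its, os.
- by exists [::], [::]; rewrite !cats0.
- by exists (u1 ++ v1), (u2 ++ v2); rewrite F1 F2 E1 E2 !catA.
Qed.

Lemma ystar c c' : astar c c' -> isYH c.1.2 -> isYH c'.1.2 /\ exists B, c'.1.1 = c.1.1 ++ map inr B.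
Proof.
elim=> [x y [lw N its N' os cs /arules_inv H] | x | x y z _ IH1 _ IH2] /=.
- move=> HY.
  case: H HY => [[-> _ _ _]|[a[b[z[cc[_ -> _ _ _]]]]]|[a[b[z[cc[t[_ _ -> -> [-> _]]]]]]]|
    [[a[b[z[cc[i[t2[_ _ -> _ _]]]]]]]|[b [[-> _ _ _]|[-> -> -> _]|[-> _ -> [-> _]]]]]] //= _.
  + by split => //; exists t.
  + by split => //; exists [::].
  + by split => //; exists [::].
- by move=> ->; split => //; exists [::]; rewrite cats0.
- move=> HY; case: (IH1 HY) => HY' [B1 E1]; case: (IH2 HY') => HY'' [B2 E2].
  by split => //; exists (B1 ++ B2); rewrite E2 E1 map_cat catA.
Qed.

Lemma prefix2 (X : Type) (p1 u1 p2 u2 : seq X) :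
  p1 ++ u1 = p2 ++ u2 -> size p1 <= size p2 -> exists u, p2 = p1 ++ u.
Proof.
move=> E Hs; exists (drop (size p1) p2).
have : take (size p1) (p1 ++ u1) = take (size p1) (p2 ++ u2) by rewrite E.
rewrite take_size_cat // takel_cat // => E1; by rewrite {1}E1 cat_take_drop.
Qed.

Lemma vw_inl A : vw (map inl A) = A.
Proof. by rewrite /vw -map_comp map_id. Qed.

Lemma vw_cat a b : vw (a ++ b) = vw a ++ vw b.
Proof. exact: map_cat. Qed.

Lemma inl_inr_inj (A A' : seq (option V)) (B B' : seq Tm) :
  map inl A ++ map inr B = map inl A' ++ map inr B' :> seq item -> A = A' /\ B = B'.
Proof.
elim: A A' => [|a A IH] [|a' A'] //=.
- move=> E; split => //; apply: (inj_map _ E) => x y; by case.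
- by case: B => //.
- by clear IH; case: B'.
- by case=> -> /IH [-> ->].
Qed.


Lemma pmap_insub_val s : all (fun x => x \in T) s -> map val (pmap (insub : V -> option Tm) s) = s.
Proof.
elim: s => //= x s IH /andP [Hx Hs].
case: insubP => [u _ Eu | nPx]; first by rewrite /= IH // Eu.
by rewrite Hx in nPx.
Qed.

Lemma tconv_val s t : tconv s = Some t -> map val t = s.
Proof. by rewrite /tconv; case: ifP => // Hall [<-]; exact: pmap_insub_val. Qed.

Lemma tconv_of s : all (fun x => x \in T) s -> exists t, tconv s = Some t.
Proof. by rewrite /tconv => ->; eexists. Qed.

Lemma somes_cat a b : somes (a ++ b) = somes a ++ somes b.
Proof. exact: pmap_cat. Qed.

Lemma somes_map z : somes (map Some z) = z.
Proof. by elim: z => //= x z ->. Qed.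

Lemma somes_nseq m : somes (nseq m None) = [::].
Proof. by elim: m. Qed.

Lemma vw_inr B : vw (map inr B) = map Some (map val B).
Proof. by rewrite /vw -!map_comp. Qed.

Definition qinit : qconf V U := ([::], [:: s0], s1).
Definition qreach (K : qconf V U) := clos_refl_trans _ (qstep R) qinit K.

Definition Inv (c : acfg) : Prop :=
  let '(lw, N, cs) := c in
  match N with
  | inl (false, b) => exists A, lw = map inl A /\ size cs < size A
  | inl (true, b) => exists A B, lw = map inl A ++ map inr B
  | inr None => lw = [::] /\ cs = [::]
  | inr (Some None) => exists A B, lw = map inl A ++ map inr B
  | inr (Some (Some _)) => False
  end.

Definition proj (lw : seq item) (cs : seq (option V)) b : qconf V U :=
  (somes cs, somes (drop (size cs) (vw lw)), b).

Definition good (c : acfg) : Prop :=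
  let '(lw, N, cs) := c in
  match N with inl (_, b) => qreach (proj lw cs b) | _ => True end.

Lemma proj_real lw lw' cs b a z cc u e :
  vw lw = cs ++ Some a :: u -> vw lw' = vw lw ++ e -> (a, b, z, cc) \in R -> somes e = z ->
  qreach (proj lw cs b) -> qreach (proj lw' (cs ++ [:: Some a]) cc).
Proof.
move=> E1 E2 HR He Hq; apply: rt_trans Hq (rt_step _ _ _ _ _).
rewrite /proj E2 E1.
have -> : (cs ++ Some a :: u) ++ e = (cs ++ [:: Some a]) ++ (u ++ e) by rewrite -!catA.
rewrite !drop_size_cat // !somes_cat He /=.
exact: QStep.
Qed.

Lemma proj_bot lw lw' cs b u e :
  vw lw = cs ++ None :: u -> vw lw' = vw lw ++ e -> somes e = [::] ->
  proj lw' (cs ++ [:: None]) b = proj lw cs b.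
Proof.
move=> E1 E2 He; rewrite /proj E2 E1.
have -> : (cs ++ None :: u) ++ e = (cs ++ [:: None]) ++ (u ++ e) by rewrite -!catA.
by rewrite !drop_size_cat // !somes_cat He /= !cats0.
Qed.


Local Notation cfin Af Bf := ((map inl Af ++ map inr Bf : seq item), NH, (Af : seq (option V))).

Lemma headP lw its N' cs o Af Bf :
  astar (lw ++ its, N', cs ++ [:: o]) (cfin Af Bf) ->
  size (cs ++ [:: o]) <= size (vw lw) -> exists u, vw lw = cs ++ o :: u.
Proof.
case/mono => u1 [u2 [/= E1 E2]] Hs.
have E3 : (cs ++ [:: o]) ++ (u2 ++ vw (map inr Bf)) = vw lw ++ vw (its ++ u1).
  rewrite catA -E2 vw_cat catA; move: (congr1 vw E1); by rewrite !vw_cat vw_inl.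
case: (prefix2 E3 Hs) => u ->; exists u; by rewrite -catA.
Qed.

Lemma ysize A B b cs Af Bf :
  astar (map inl A ++ map inr B, NY b, cs) (cfin Af Bf) -> Af = A.
Proof.
case/ystar => // _ [B' /= E].
rewrite -catA -map_cat in E; by case: (inl_inr_inj E).
Qed.

Lemma sim c : clos_refl_trans_n1 _ astep cinit c -> forall Af Bf,
  astar c (cfin Af Bf) -> Inv c /\ good c.
Proof.
move=> H Af Bf; elim: H => [|y y2 Hyz Hxy IH] Hf; first by split.
have Hf' : astar y (cfin Af Bf) by apply: rt_trans (rt_step _ _ _ _ Hyz) Hf.
case: (IH Hf') => Iy Gy; clear IH.
case: Hyz Hf Hf' Iy Gy => lw N its N' os cs /arules_inv
  [[-> -> -> ->] | [a[b[z[cc[Hr -> -> -> ->]]]]] | [a[b[z[cc[t[Hr Ht -> -> [-> ->]]]]]]] |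
   [[a[b[z[cc[i[t2[Hr Ht -> -> [-> ->]]]]]]]] | [b [[-> -> -> ->]|[-> -> -> ->]|[-> Hb -> [-> ->]]]]]] Hf Hf' /=.
- by move=> [-> ->] _; split; [exists [:: Some s0] | exact: rt_refl].
- move=> [A [EA Hs]] Gy; subst lw; split.
    exists (A ++ rcons (map Some z) None); rewrite map_cat; split => //.
    by rewrite !size_cat size_rcons size_map /=; lia.
  case: (headP Hf) => [|u Eu]; first by rewrite vw_inl size_cat /=; lia.
  apply: (proj_real Eu _ Hr _ Gy); first by rewrite vw_cat.
  by rewrite vw_inl -cats1 somes_cat somes_map cats0.
- move=> [A [B EA]] Gy; subst lw; split.
    by exists A, (B ++ t); rewrite map_cat catA.
  have EAf := ysize Hf'; subst Af.
  case: (mono Hf) => u1 [u2 [_ /= E2]].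
  case: (headP Hf) => [|u Eu].
    by rewrite vw_cat size_cat vw_inl E2 !size_cat; apply: leq_trans (leq_addr _ _) (leq_addr _ _).
  apply: (proj_real Eu _ Hr _ Gy); first by rewrite vw_cat.
  by rewrite vw_inr somes_map (tconv_val Ht).
- move=> [A [EA Hs]] Gy; subst lw; split.
    by exists (A ++ map Some (take i z)), t2; rewrite map_cat !catA.
  case: (headP Hf) => [|u Eu]; first by rewrite vw_inl size_cat /=; lia.
  apply: (proj_real Eu _ Hr _ Gy); first by rewrite vw_cat.
  by rewrite vw_cat vw_inl vw_inr somes_cat !somes_map (tconv_val Ht) cat_take_drop.
- move=> [A [EA Hs]] Gy; subst lw; split.
    by exists (A ++ [:: None]); rewrite map_cat !size_cat ltn_add2r.
  case: (headP Hf) => [|u Eu]; first by rewrite vw_inl size_cat /=; lia.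
  by rewrite (proj_bot _ Eu (vw_cat _ _)).
- move=> [A [B EA]] Gy; subst lw; split.
    by exists A, B; rewrite cats0.
  have EAf := ysize Hf'; subst Af.
  case: (mono Hf) => u1 [u2 [_ /= E2]].
  case: (headP Hf) => [|u Eu].
    by rewrite vw_cat size_cat vw_inl E2 !size_cat; apply: leq_trans (leq_addr _ _) (leq_addr _ _).
  by rewrite (proj_bot _ Eu (vw_cat _ _)).
- move=> [A [B EA]] _; subst lw; split => //.
  by exists A, B; rewrite cats0.
Qed.


Lemma unary_inj i j (r1 r2 : seq bool) :
  nseq i true ++ false :: r1 = nseq j true ++ false :: r2 -> i = j /\ r1 = r2.
Proof.
elim: i j => [|i IH] [|j] //=; first by case.
by case=> /IH [-> ->].
Qed.

Lemma cd_cat o r : cd o ++ r = nseq (pickle o) true ++ false :: r.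
Proof. by rewrite /cd -cats1 -catA. Qed.

Lemma cd_inj s1' s2' : flatten (map cd s1') = flatten (map cd s2') -> s1' = s2'.
Proof.
elim: s1' s2' => [|x s IH] [|y s'] //=.
- by rewrite cd_cat; case: (pickle y).
- by rewrite cd_cat; case: (pickle x).
- rewrite !cd_cat => /unary_inj [/(pcan_inj pickleK) -> /IH ->] //.
Qed.

Definition hashg : gs := inr NH.
Definition Wl : seq gs := [:: bsym false; bsym true; hashg].

Lemma enc_inl A : flatten (map enc (map inl A)) = map bsym (flatten (map cd A)).
Proof. by elim: A => //= o A ->; rewrite map_cat. Qed.

Lemma enc_inr B : flatten (map enc (map inr B)) = map inl B.
Proof. by elim: B => //= t B ->. Qed.

Lemma renc_rev cs : flatten (map renc (rev cs)) = map bsym (rev (flatten (map cd cs))).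
Proof.
elim: cs => //= o cs IH.
by rewrite rev_cons -cats1 map_cat flatten_cat IH /= cats0 rev_cat map_cat.
Qed.

Lemma piX_bsym l : piX Wl (map bsym l) = map bsym l.
Proof. by elim: l => //= x l ->; rewrite /Wl !inE; case: x. Qed.

Lemma piX_inl (B : seq Tm) : piX Wl (map inl B) = [::].
Proof. by elim: B. Qed.

Lemma piT_bsym l : piT (map bsym l) = [::].
Proof. by elim: l. Qed.

Lemma piT_inl (B : seq Tm) : piT (map inl B : seq gs) = B.
Proof. by elim: B => //= t B ->. Qed.

Lemma split_hash (a b c d : seq gs) :
  hashg \notin a -> hashg \notin c -> a ++ hashg :: b = c ++ hashg :: d -> a = c /\ b = d.
Proof.
elim: a c => [|x a IH] [|y c] //=.
- by move=> _ _ [].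
- by move=> _; rewrite inE negb_or => /andP [/negP H _] [E _]; case: H; rewrite E.
- by rewrite inE negb_or => /andP [/negP H _] _ [E _]; case: H; rewrite E.
- rewrite !inE !negb_or => /andP [_ Ha] /andP [_ Hc] [-> E].
  by case: (IH _ Ha Hc E) => -> ->.
Qed.

Lemma hash_bsym l : hashg \notin map bsym l.
Proof. by elim: l. Qed.

Lemma bsym_inj : injective bsym.
Proof. by move=> x y []. Qed.


Lemma inv_reach c : clos_refl_trans_n1 _ astep cinit c -> Inv c.
Proof.
elim=> [|y y2 Hyz Hxy Iy]; first by [].
case: Hyz Iy => lw N its N' os cs /arules_inv
  [[-> -> -> ->] | [a[b[z[cc[Hr -> -> -> ->]]]]] | [a[b[z[cc[t[Hr Ht -> -> [-> ->]]]]]]] |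
   [[a[b[z[cc[i[t2[Hr Ht -> -> [-> ->]]]]]]]] | [b [[-> -> -> ->]|[-> -> -> ->]|[-> Hb -> [-> ->]]]]]] /=.
- by move=> [-> ->]; exists [:: Some s0].
- move=> [A [-> Hs]]; exists (A ++ rcons (map Some z) None); rewrite map_cat; split => //.
  by rewrite !size_cat size_rcons size_map addn1 addnS ltnS; apply: leq_trans Hs (leq_addr _ _).
- by move=> [A [B ->]]; exists A, (B ++ t); rewrite map_cat catA.
- by move=> [A [-> _]]; exists (A ++ map Some (take i z)), t2; rewrite map_cat !catA.
- by move=> [A [-> Hs]]; exists (A ++ [:: None]); rewrite map_cat !size_cat ltn_add2r.
- by move=> [A [B ->]]; exists A, B; rewrite cats0.
- by move=> [A [B ->]]; exists A, B; rewrite cats0.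
Qed.

Lemma pred_final c : clos_refl_trans_n1 _ astep cinit c -> c.1.2 = NH ->
  exists lw0 b cs0, [/\ clos_refl_trans_n1 _ astep cinit (lw0, NY b, cs0), b \in D,
     astar (lw0, NY b, cs0) (lw0, NH, cs0) & c = (lw0, NH, cs0)].
Proof.
case=> [|y y2 Hyz Hxy] //=.
case: Hyz Hxy => lw N its N' os cs Hin Hxy /= EN; move: Hin.
move/arules_inv => [[_ _ E _] | [a[b[z[cc[_ _ _ E _]]]]] | [a[b[z[cc[t[_ _ _ _ [E _]]]]]]] |
   [[a[b[z[cc[i[t2[_ _ _ _ [E _]]]]]]]] | [b [[_ _ E _]|[_ _ E _]|[EN0 Hb Eits [_ Eos]]]]]];
  try by rewrite EN in E.
subst N its os N'.
exists lw, b, cs; rewrite !cats0; split => //.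
apply: rt_step; rewrite -{2}(cats0 lw) -{2}(cats0 cs); apply: AStep.
rewrite /arules !mem_cat; apply/orP; right; apply/orP; right; apply/orP; right.
by apply/mapP; exists b; rewrite ?mem_enum.
Qed.

Lemma piX_cat a b : piX Wl (a ++ b) = piX Wl a ++ piX Wl b.
Proof. exact: filter_cat. Qed.

Lemma piT_cat (a b : seq gs) : piT (a ++ b) = piT a ++ piT b.
Proof. exact: pmap_cat. Qed.

Lemma G2Q vt : cflangF P NS (bsym false) (bsym true) hashg vt -> qlang T D s0 s1 R (map val vt).
Proof.
case=> y [Hs HF Hnt ->].
case: (sent_reach Hs) => c [Hc Ey]; subst y.
move/clos_rt_rtn1_iff: Hc => Hc.
have Ic := inv_reach Hc.
have HN : c.1.2 = NH.
  move: Hnt => /eqP; rewrite -[_ == _]negbK -has_filter => /hasPn H.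
  clear HF Hs; case: c Hc Ic H => [[lw N] cs] _ Ic /= H.
  have : inr N \in conc (lw, N, cs) by rewrite /= mem_cat inE eqxx orbT.
  move/H; rewrite /= negbK; clear H.
  by case: N Ic => [[[] b]|[[[]|]|]] //=; rewrite !inE.
case: (pred_final Hc HN) => lw0 [b [cs0 [Hr Hb Hst Ec]]]; subst c.
case: (inv_reach Hr) => A [B Elw]; subst lw0.
move: HF; rewrite /= map_cat flatten_cat enc_inl enc_inr renc_rev -catA !piX_cat piX_bsym piX_inl.
rewrite [piX _ (_ :: _)]/= piX_bsym => [[w]] /=.
have -> : map (fun b : bool => if b then bsym true else bsym false) w = map bsym w by apply: eq_map; case.
move/split_hash => /(_ (hash_bsym _) (hash_bsym _)) [E1 E2].
move/(inj_map bsym_inj): E1 => E1.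
rewrite -map_rev in E2; move/(inj_map bsym_inj)/(inv_inj (@revK _)): E2 => E2.
have EA : A = cs0 by apply: cd_inj; rewrite E1 E2.
subst cs0.
have [_ Gy] := sim Hr Hst.
split.
  by apply/allP => x /mapP [t _ ->]; exact: valP.
exists (somes A), b; split => //.
move: Gy; rewrite /good /qreach /proj vw_cat vw_inl vw_inr drop_size_cat // somes_map.
by rewrite !piT_cat piT_bsym piT_inl /= piT_bsym cats0.
Qed.


Lemma qsize K K' : clos_refl_trans_1n _ (qstep R) K K' -> size K.1.1 <= size K'.1.1.
Proof.
elim=> // x y z [w r zz a b c _] _ /=; rewrite size_cat /= => H.
by apply: leq_trans H; rewrite addn1.
Qed.

Lemma qempty w b K' : clos_refl_trans_1n _ (qstep R) (w, [::], b) K' -> K' = (w, [::], b).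
Proof. by case=> // y z H; inversion H. Qed.

Lemma somes_split (Rr : seq (option V)) a p : somes Rr = a :: p ->
  exists m R', Rr = nseq m None ++ Some a :: R' /\ somes R' = p.
Proof.
elim: Rr => //= [[x|] Rr IH] /=.
- by case=> -> <-; exists 0, Rr.
- by case/IH => m [R' [-> E]]; exists m.+1, R'.
Qed.

Lemma somes_nil (Rr : seq (option V)) : somes Rr = [::] -> Rr = nseq (size Rr) None.
Proof. by elim: Rr => //= [[x|] Rr IH] //= /IH <-. Qed.

Lemma mem_ybot b : (NY b, [::], NY b, [:: None]) \in arules.
Proof.
rewrite /arules !mem_cat; apply/orP; right; apply/orP; right; apply/orP; left.
by apply/flatten_mapP; exists b; rewrite ?mem_enum // !inE eqxx orbT.
Qed.

Lemma mem_xbot b : (NX b, [:: inl None], NX b, [:: None]) \in arules.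
Proof.
rewrite /arules !mem_cat; apply/orP; right; apply/orP; right; apply/orP; left.
by apply/flatten_mapP; exists b; rewrite ?mem_enum // !inE eqxx.
Qed.

Lemma mem_rule a b z c ar : (a, b, z, c) \in R -> ar \in rulesOf (a, b, z, c) -> ar \in arules.
Proof.
move=> Hr Har; rewrite /arules !mem_cat; apply/orP; right; apply/orP; left.
by apply/flatten_mapP; exists (a, b, z, c).
Qed.

Lemma mem_xreal a b z c : (a, b, z, c) \in R ->
  (NX b, map inl (rcons (map Some z) None), NX c, [:: Some a]) \in arules.
Proof. by move/mem_rule; apply; rewrite /= inE eqxx. Qed.

Lemma mem_yreal a b z c t : (a, b, z, c) \in R -> tconv z = Some t ->
  (NY b, map inr t, NY c, [:: Some a]) \in arules.
Proof. by move/mem_rule => H Ht; apply: H; rewrite /= Ht !inE eqxx orbT. Qed.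

Lemma mem_switch a b z c i t2 : (a, b, z, c) \in R -> i <= size z -> tconv (drop i z) = Some t2 ->
  (NX b, map inl (map Some (take i z)) ++ map inr t2, NY c, [:: Some a]) \in arules.
Proof.
move/mem_rule => H Hi Ht; apply: H; rewrite /= inE mem_cat; apply/orP; right; apply/orP; right.
rewrite /swrules mem_pmap; apply/mapP; exists i; first by rewrite mem_iota.
by rewrite Ht.
Qed.

Lemma astep' lw N its N' os cs : (N, its, N', os) \in arules ->
  astar (lw, N, cs) (lw ++ its, N', cs ++ os).
Proof. by move=> H; apply: rt_step; apply: AStep. Qed.

Lemma ybots lw b cs m : astar (lw, NY b, cs) (lw, NY b, cs ++ nseq m None).
Proof.
elim: m cs => [|m IH] cs; first by rewrite cats0; apply: rt_refl.
apply: rt_trans (astep' lw cs (mem_ybot b)) _.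
have -> : cs ++ nseq m.+1 None = (cs ++ [:: None]) ++ nseq m None by rewrite -catA.
by rewrite cats0; apply: IH.
Qed.

Lemma xbots A b cs m : astar (map inl A, NX b, cs) (map inl (A ++ nseq m None), NX b, cs ++ nseq m None).
Proof.
elim: m A cs => [|m IH] A cs; first by rewrite !cats0; apply: rt_refl.
apply: rt_trans (astep' (map inl A) cs (mem_xbot b)) _.
have -> : cs ++ nseq m.+1 None = (cs ++ [:: None]) ++ nseq m None by rewrite -catA.
have -> : A ++ nseq m.+1 None = (A ++ [:: None]) ++ nseq m None by rewrite -catA.
by rewrite -(map_cat inl A [:: None]); apply: IH.
Qed.


Lemma qstep_inv w x b w1 x1 c : qstep R (w, x, b) (w1, x1, c) ->
  exists a r z, [/\ (a, b, z, c) \in R, x = a :: r, w1 = w ++ [:: a] & x1 = r ++ z].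
Proof. move=> H; inversion H; subst; by exists a, r, z. Qed.

Lemma Ysim K K' : clos_refl_trans_1n _ (qstep R) K K' ->
  forall w x b wf xf f, K = (w, x, b) -> K' = (wf, xf, f) ->
  forall p q, x = p ++ q -> size wf = size w + size p -> all (fun v => v \in T) xf ->
  forall lw cs Rr, somes Rr = p ->
  exists Bt, astar (lw, NY b, cs) (lw ++ map inr Bt, NY f, cs ++ Rr) /\ xf = q ++ map val Bt.
Proof.
elim=> [K0 | K0 K1 K2 Hst Hrest IH] w x b wf xf f E0 E2 p q Ex Hsz HT lw cs Rr Hp.
- rewrite E0 in E2; case: E2 => Ew Ex' Eb; subst wf xf f.
  have : size p = 0 by lia.
  move/size0nil => Ep; rewrite Ep in Hp Ex.
  exists [::]; rewrite !cats0 Ex; split => //.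
  rewrite (somes_nil Hp); exact: ybots.
- subst K0 K2; case: K1 Hst Hrest IH => [[w1 x1] c] Hst Hrest IH.
  case: (qstep_inv Hst) => a [r [z [Hr Ex0 Ew1 Ex1]]]; subst w1 x1; rewrite Ex0 in Ex; clear Ex0.
  have Hs1 := qsize Hrest; rewrite /= size_cat /= in Hs1.
  case: p Ex Hsz Hp => [|a' p'] Ex Hsz Hp; first by exfalso; move: Hsz Hs1 => /= ->; rewrite addn0 addn1 ltnn.
  case: Ex => Ea Er; subst a' r.
  case: (somes_split Hp) => m [R' [ER HR']]; subst Rr.
  have Hsz' : size wf = size (w ++ [:: a]) + size p' by rewrite size_cat Hsz /=; lia.
  have IH' := IH (w ++ [:: a]) ((p' ++ q) ++ z) c wf xf f erefl erefl p' (q ++ z) (esym (catA _ _ _)) Hsz' HT.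
  case: (IH' [::] [::] R' HR') => Bt0 [_ Exf].
  have HTz : all (fun v => v \in T) z by move: HT; rewrite Exf !all_cat => /andP [/andP [_ ->]].
  case: (tconv_of HTz) => t Ht.
  case: (IH' (lw ++ map inr t) ((cs ++ nseq m None) ++ [:: Some a]) R' HR') => Bt [Hst' Exf'].
  exists (t ++ Bt); split.
    apply: rt_trans (ybots lw b cs m) _.
    apply: rt_trans (astep' lw (cs ++ nseq m None) (mem_yreal Hr Ht)) _.
    move: Hst'; rewrite map_cat -!catA /= => H; rewrite ?catA -?catA /=; exact: H.
  by rewrite Exf' map_cat (tconv_val Ht) !catA.
Qed.


Lemma Xsim K K' : clos_refl_trans_1n _ (qstep R) K K' ->
  forall w x b wf xf f, K = (w, x, b) -> K' = (wf, xf, f) ->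
  size w + size x <= size wf -> 0 < size x -> all (fun v => v \in T) xf ->
  forall A cs Rr, A = cs ++ Rr -> somes Rr = x ->
  exists Af Bf, astar (map inl A, NX b, cs) (map inl Af ++ map inr Bf, NY f, Af) /\ xf = map val Bf.
Proof.
elim=> [K0 | K0 K1 K2 Hst Hrest IH] w x b wf xf f E0 E2 Hsz Hx HT A cs Rr EA Hp.
- rewrite E0 in E2; case: E2 => Ew _ _; subst wf.
  by exfalso; move: Hsz Hx; rewrite -{2}[size w]addn0 leq_add2l leqn0 => /eqP ->.
- subst K0 K2; case: K1 Hst Hrest IH => [[w1 x1] c] Hst Hrest IH.
  case: (qstep_inv Hst) => a [r [z [Hr Ex0 Ew1 Ex1]]]; subst w1 x1; rewrite Ex0 in Hp Hsz; clear Ex0.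
  case: (somes_split Hp) => m [R' [ER HR']]; subst Rr A.
  have Hb := xbots (cs ++ nseq m None ++ Some a :: R') b cs m.
  rewrite /= in Hsz.
  case: (ltnP (size (w ++ [:: a]) + size (r ++ z)) (size wf)) => Hlt.
  + have Hx1 : 0 < size (r ++ z).
      case E: (r ++ z) => [|y ys] //; rewrite E in Hrest Hlt.
      case: (qempty Hrest) => Ew _ _.
      by rewrite Ew addn0 ltnn in Hlt.
    have E1 : (cs ++ nseq m None ++ Some a :: R') ++ nseq m None ++ rcons (map Some z) None =
      ((cs ++ nseq m None) ++ [:: Some a]) ++ (R' ++ nseq m None ++ rcons (map Some z) None)
      by rewrite -!catA.
    have E2 : somes (R' ++ nseq m None ++ rcons (map Some z) None) = r ++ z
      by rewrite !somes_cat HR' somes_nseq -cats1 somes_cat somes_map cats0.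
    have [Af [Bf [Hs Exf]]] := IH (w ++ [:: a]) (r ++ z) c wf xf f erefl erefl (ltnW Hlt) Hx1 HT
      _ _ _ E1 E2.
    exists Af, Bf; split => //.
    apply: rt_trans Hb _.
    apply: rt_trans (astep' _ (cs ++ nseq m None) (mem_xreal Hr)) _.
    by rewrite -map_cat -catA.
  + have [i Hi Hsz'] : exists2 i, i <= size z & size wf = size (w ++ [:: a]) + size (r ++ take i z).
      exists (size wf - size w - 1 - size r).
        by move: Hlt Hsz; rewrite !size_cat /=; lia.
      rewrite !size_cat size_takel /=; first by lia.
      by move: Hlt Hsz; rewrite !size_cat /=; lia.
    have Ex : r ++ z = (r ++ take i z) ++ drop i z by rewrite -catA cat_take_drop.
    have HR2 : somes (R' ++ nseq m None ++ map Some (take i z)) = r ++ take i z.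
      by rewrite !somes_cat HR' somes_nseq somes_map.
    case: (Ysim Hrest erefl erefl Ex Hsz' HT [::] [::] HR2) => Bt0 [_ Exf0].
    have HT2 : all (fun v => v \in T) (drop i z) by move: HT; rewrite Exf0 all_cat => /andP [].
    case: (tconv_of HT2) => t2 Ht2.
    case: (Ysim Hrest erefl erefl Ex Hsz' HT
      (map inl ((cs ++ nseq m None ++ Some a :: R') ++ nseq m None ++ map Some (take i z)) ++ map inr t2)
      ((cs ++ nseq m None) ++ [:: Some a]) HR2) => Bt [HsY Exf].
    exists ((cs ++ nseq m None ++ Some a :: R') ++ nseq m None ++ map Some (take i z)), (t2 ++ Bt); split.
      apply: rt_trans Hb _.
      apply: rt_trans (astep' _ (cs ++ nseq m None) (mem_switch Hr Hi Ht2)) _.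
      move: HsY; rewrite !map_cat -!catA /= => H; rewrite ?map_cat -?catA /=; exact: H.
    by rewrite Exf map_cat (tconv_val Ht2).
Qed.


Lemma conc_fin A B cs : conc (map inl A ++ map inr B, NH, cs) =
  map bsym (flatten (map cd A)) ++ map inl B ++ hashg :: map bsym (rev (flatten (map cd cs))).
Proof. by rewrite /= map_cat flatten_cat enc_inl enc_inr renc_rev -catA. Qed.

Lemma init_step K' : clos_refl_trans_1n _ (qstep R) qinit K' -> K' = qinit \/ 1 <= size K'.1.1.
Proof.
case=> [|y z Hst Hrest]; [by left | right].
case: y Hst Hrest => [[w1 x1] c] Hst Hrest.
case: (qstep_inv Hst) => a [r [z' [_ _ Ew _]]]; subst w1.
exact: (qsize Hrest).
Qed.

Lemma mem_start : (NS, [:: inl (Some s0)], NX s1, [::]) \in arules.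
Proof. by rewrite /arules mem_cat inE eqxx. Qed.

Lemma mem_final f : f \in D -> (NY f, [::], NH, [::]) \in arules.
Proof.
move=> Hf; rewrite /arules !mem_cat; apply/orP; right; apply/orP; right; apply/orP; right.
by apply/mapP; exists f; rewrite ?mem_enum.
Qed.

Lemma Q2G (Hs1 : s1 \notin D) v : qlang T D s0 s1 R v ->
  exists vt, cflangF P NS (bsym false) (bsym true) hashg vt /\ v = map val vt.
Proof.
case=> HT [w [f [Hf Hr]]].
move/clos_rt_rt1n_iff: Hr => Hr.
have Hw : 0 + size [:: s0] <= size w.
  case: (init_step Hr) => [[_ _ Ef] | //]; by rewrite -Ef Hf in Hs1.
have [Af [Bf [Hs Ev]]] := Xsim Hr erefl erefl Hw erefl HT (A := [:: Some s0]) (cs := [::]) erefl erefl.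
exists Bf; split => //.
exists (conc (map inl Af ++ map inr Bf, NH, Af)); split.
- apply: reach_sent.
  apply: rt_trans (astep' [::] [::] mem_start) _.
  apply: rt_trans Hs _.
  have := astep' (map inl Af ++ map inr Bf) Af (mem_final Hf).
  by rewrite !cats0.
- rewrite conc_fin; exists (flatten (map cd Af)).
  rewrite !piX_cat piX_bsym piX_inl /= piX_bsym.
  have -> : map (fun b : bool => if b then bsym true else bsym false) (flatten (map cd Af)) =
            map bsym (flatten (map cd Af)) by apply: eq_map; case.
  by rewrite map_rev.
- rewrite conc_fin; apply/eqP; rewrite -[_ == _]negbK -has_filter; apply/hasPn => x.
  rewrite !mem_cat inE => /or3P [/mapP [b _ ->] | /mapP [t _ ->] | /orP [/eqP -> | /mapP [b _ ->]]] //=;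
  by rewrite !inE; case: b.
- by rewrite conc_fin !piT_cat piT_bsym piT_inl /= piT_bsym cats0.
Qed.

End Constr.

Theorem lemma4 (V U : finType) (T : {set V}) (D : {set U}) (s0 : V) (s1 : U)
  (R : seq (V * U * seq V * U))
  (Hs0 : s0 \notin T) (Hs1 : s1 \notin D)
  (HR : forall a b z c, (a, b, z, c) \in R -> b \notin D) :
  exists (Nt : finType) (P : seq (Nt * seq (gsym (termT T) Nt))) (S : Nt)
         (zero one hash : gsym (termT T) Nt),
    uniq [:: zero; one; hash] /\
    forall v : seq V,
      qlang T D s0 s1 R v <->
      exists vt : seq (termT T), cflangF P S zero one hash vt /\ v = map val vt.
Proof.
exists (Nt U), (P T D s0 s1 R), (NS U), (bsym U T false), (bsym U T true), (hashg U T).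
split; first by [].
move=> v; split; first exact: Q2G.
by case=> vt [H ->]; exact: G2Q.
Qed.
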